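(* Let $\Phi$ be a Young function, $\varphi\in\mathcal{G}^{\rm dec}_1$, $n\ge2$, $k\in[2,n]\cap\mathbb{N}$ and $a_0,\dots,a_{k-1}>0$. Then, writing points of $\mathbb{R}^n$ as $(x_0,\dots,x_{n-1})$, \[ \bigl\|\chi_{\prod_{j=0}^{k-1}[0,a_j]\times\mathbb{R}^{n-k}}\bigr\|_{\mathcal{M}_\Phi^\varphi,\mathrm{cube}}=\sup_{R>0}\frac1{\varphi(R)}\Phi^{-1}\Bigl(\frac{R^k}{\prod_{j=0}^{k-1}\min(a_j,R)}\Bigr)^{-1}. \]
   Context: A Young function is a convex $\Phi:[0,\infty)\to[0,\infty)$ with $\Phi(0)=0$, $\lim_{t\to\infty}\Phi(t)=\infty$; its generalized inverse is $\Phi^{-1}(u)=\inf\{t\ge0:\Phi(t)>u\}$ for $u\in[0,\infty)$. $\mathcal{G}^{\rm dec}_1$ is the set of $\varphi:(0,\infty)\to(0,\infty)$ that are almost decreasing (there is $C>0$ with $C\varphi(r)\ge\varphi(s)$ for $r<s$) and submultiplicative ($\varphi(rs)\le C\varphi(r)\varphi(s)$). For $a\in\mathbb{R}^n$, $r>0$, $Q(a,r)=\{x:\max_i|x_i-a_i|\le r\}$ is the cube of side length $2r$; $\|f\|_{\Phi,Q}=\inf\{\lambda>0:\frac1{|Q|}\int_Q\Phi(|f|/\lambda)\le1\}$, and the cube version of the Orlicz–Morrey norm is $\|f\|_{\mathcal{M}_\Phi^\varphi,\mathrm{cube}}=\sup_{a\in\mathbb{R}^n,r>0}\frac1{\varphi(2r)}\|f\|_{\Phi,Q(a,r)}$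 (equivalent up to constants to the ball version $\sup_{a,r}\frac1{\varphi(r)}\|f\|_{\Phi,B(a,r)}$). $\chi_E$ is the characteristic function of $E$. *)

(* Defs.v *)
From HB Require Import structures.
From mathcomp Require Import all_boot all_order all_algebra.
From mathcomp Require Import all_classical all_reals all_analysis.
Set Implicit Arguments. Unset Strict Implicit. Unset Printing Implicit Defensive.
Import Order.TTheory GRing.Theory Num.Theory.
Local Open Scope classical_set_scope.
Local Open Scope ring_scope.

Section Defs.
Variable R : realType.

Definition young (Phi : R -> R) : Prop :=
  [/\ Phi 0 = 0,
      (forall t, 0 <= t -> 0 <= Phi t),
      (forall s t l, 0 <= s -> 0 <= t -> 0 <= l <= 1 ->
         Phi (l * s + (1 - l) * t) <= l * Phi s + (1 - l) * Phi t)
    & Phi x @[x --> +oo] --> +oo].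

Definition young_inv (Phi : R -> R) (u : R) : R :=
  inf [set t : R | 0 <= t /\ u < Phi t].

Definition Gdec1 (phi : R -> R) : Prop :=
  [/\ (forall r, 0 < r -> 0 < phi r),
      (exists2 C : R, 0 < C & forall r s, 0 < r -> r < s -> phi s <= C * phi r)
    & (exists2 C : R, 0 < C & forall r s, 0 < r -> 0 < s ->
          phi (r * s) <= C * phi r * phi s)].

(* Points of R^n are n-tuples (x_0, ..., x_{n-1}).
   Lebesgue integral on R^n of a nonnegative function, computed as the
   iterated one-dimensional Lebesgue integral (Tonelli). *)
Fixpoint integral_Rn (n : nat) : (n.-tuple R -> \bar R) -> \bar R :=
  match n return (n.-tuple R -> \bar R) -> \bar R with
  | 0 => fun F => F [tuple]
  | n'.+1 => fun F =>
      (\int[@lebesgue_measure R]_t integral_Rn (fun x : n'.-tuple R => F [tuple of t :: x]))%E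
  end.

(* the cube Q(a, r) = {x : max_i |x_i - a_i| <= r}, of side length 2r *)
Definition cube (n : nat) (a : n.-tuple R) (r : R) : set (n.-tuple R) :=
  [set x | forall i : 'I_n, `|tnth x i - tnth a i| <= r].

(* Luxemburg norm ||f||_{Phi,Q(a,r)}; |Q(a,r)| = (2r)^n *)
Definition lux_norm (Phi : R -> R) (n : nat) (f : n.-tuple R -> R)
    (a : n.-tuple R) (r : R) : \bar R :=
  ereal_inf [set (l%:E) | l in [set l : R | 0 < l /\
     (((2 * r) ^+ n)^-1%:E *
        integral_Rn (fun x => (\1_(cube a r) x * Phi (`|f x| / l))%:E) <= 1)%E]].

Definition OM_cube_norm (Phi phi : R -> R) (n : nat) (f : n.-tuple R -> R)
    : \bar R :=
  ereal_sup [set z | exists (a : n.-tuple R) (r : R),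
      0 < r /\ z = ((phi (2 * r))^-1%:E * lux_norm Phi f a r)%E].

End Defs.

(* Main.v *)
Require Import Defs.
From HB Require Import structures.
From mathcomp Require Import all_boot all_order all_algebra.
From mathcomp Require Import all_classical all_reals all_analysis.
From mathcomp Require Import lra.
Import Order.TTheory GRing.Theory Num.Theory.
Local Open Scope classical_set_scope.
Local Open Scope ring_scope.

Section Young.
Variables (R : realType) (Phi : R -> R).
Hypothesis hY : young Phi.

Lemma young_le_scale {s t} : 0 <= s -> s <= t -> 0 < t -> Phi s * t <= s * Phi t.
Proof.
move=> s0 st tp; case: hY => P0 Pge Pcvx _.
have t0 : 0 <= t by apply: ltW.
have l01 : 0 <= s / t <= 1.
  by rewrite divr_ge0 //= ler_pdivrMr // mul1r.
have := Pcvx t 0 (s / t) t0 (lexx 0) l01.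
rewrite mulr0 addr0 P0 mulr0 addr0 divfK ?gt_eqF //.
by rewrite -ler_pdivlMr // mulrAC.
Qed.

Lemma young_mono {s t} : 0 <= s -> s <= t -> Phi s <= Phi t.
Proof.
move=> s0 st; have t0 : 0 <= t by apply: le_trans st.
have [t0'|tp] := eqVneq t 0.
  by have -> : s = t by apply: le_anti; rewrite st t0' s0.
have {tp}tp : 0 < t by rewrite lt_neqAle eq_sym tp.
have h := young_le_scale s0 st tp.
rewrite -(ler_pM2r tp); apply: (le_trans h); rewrite mulrC ler_wpM2l //.
by case: hY => _ Pge _ _; apply: Pge.
Qed.

Lemma young_ex u : exists t, 0 <= t /\ u < Phi t.
Proof.
case: hY => _ _ _ /cvgryPgt /(_ u) [M [Mr HM]].
exists (Num.max M 0 + 1); split; first by rewrite addr_ge0 // le_max lexx orbT.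
apply: HM; apply: (le_lt_trans (y := Num.max M 0)); first by rewrite le_max lexx.
by rewrite ltrDl.
Qed.

Definition Sset u := [set t : R | 0 <= t /\ u < Phi t].

Lemma Sset_n0 u : Sset u !=set0.
Proof. by have [t ht] := young_ex u; exists t. Qed.

Lemma Sset_lb u : has_lbound (Sset u).
Proof. by exists 0 => t [t0 _]. Qed.

Lemma yinv_gt0 u : 0 < u -> 0 < young_inv Phi u.
Proof.
move=> u0; case: hY => P0 Pge _ _.
have P1 : 0 <= Phi 1 by apply: Pge.
set b := Num.min 1 (u / (Phi 1 + 1)).
have b0 : 0 < b by rewrite lt_min ltr01 divr_gt0 // ltr_wpDl.
apply: (lt_le_trans b0); apply: lb_le_inf; first exact: Sset_n0.
move=> t [t0 ut]; rewrite leNgt; apply/negP => tb.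
have t1 : t <= 1 by apply/ltW/(lt_le_trans tb); rewrite ge_min lexx.
have := young_le_scale t0 t1 ltr01; rewrite mulr1 => h.
have : Phi t < u; last by rewrite ltNge (ltW ut).
apply: (le_lt_trans h).
have : t * (Phi 1 + 1) < u.
  by rewrite -ltr_pdivlMr ?ltr_wpDl //; apply: (lt_le_trans tb); rewrite ge_min lexx orbT.
apply: le_lt_trans; rewrite ler_wpM2l // lerDl //.
Qed.

Lemma yinv_below u s : 0 <= s -> s < young_inv Phi u -> Phi s <= u.
Proof.
move=> s0 st; rewrite leNgt; apply/negP => us.
have : young_inv Phi u <= s by apply: ge_inf; [exact: Sset_lb | split].
by rewrite leNgt st.
Qed.

Lemma yinv_above u s : young_inv Phi u < s -> u < Phi s.
Proof.
move=> st; have [y [y0 uy] ys] := inf_lt (Sset_n0 u) st.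
apply: (lt_le_trans uy); apply: young_mono => //; exact: ltW.
Qed.
End Young.

Lemma leb_itv (R : realType) (l h : R) :
  (lebesgue_measure (`[l, h]%classic : set R) = (Num.max (h - l) 0)%:E)%E.
Proof.
rewrite lebesgue_measure_itv /= lte_fin.
case: ltP => lh.
  by rewrite max_l ?subr_ge0 ?ltW //.
by rewrite max_r // subr_le0.
Qed.

Lemma integral_box (R : realType) (n : nat) (c : R) (lo hi : nat -> R) :
  0 <= c ->
  integral_Rn (fun x : n.-tuple R =>
    (c * \prod_(i < n) \1_(`[lo i, hi i]%classic : set R) (tnth x i))%:E)
  = (c * \prod_(i < n) Num.max (hi i - lo i) 0)%:E.
Proof.
elim: n c lo hi => [|n IH] c lo hi c0 /=.
  by rewrite !big_ord0.
under eq_fun => t.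
  rewrite (_ : (fun x : n.-tuple R => _) = (fun x : n.-tuple R =>
     ((c * \1_(`[lo 0%N, hi 0%N]%classic : set R) t) *
      \prod_(i < n) \1_(`[lo i.+1, hi i.+1]%classic : set R) (tnth x i))%:E)); last first.
    apply/funext => x; rewrite big_ord_recl tnth0 mulrA; congr ((_ * _) * _)%:E.
    by apply: eq_bigr => i _; rewrite tnthS lift0.
  rewrite (IH _ (fun i => lo i.+1) (fun i => hi i.+1)); last first.
    by rewrite mulr_ge0.
  rewrite mulrAC (mulrC c).
  over.
rewrite /=.
under eq_integral => x _ do rewrite EFinM.
rewrite ge0_integralZl_EFin //; last first.
all: try solve [by rewrite mulr_ge0 // prodr_ge0 // => i _; rewrite le_max lexx orbT
 | by apply/measurable_realfun.measurable_EFinP; apply: measurable_realfun.measurable_indic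
 | by move=> x _; rewrite lee_fin indic_ge0].
rewrite integral_indic //= setIT leb_itv -EFinM.
rewrite big_ord_recl /=; congr (_%:E).
rewrite [X in _ = _ * X](_ : _ = Num.max (hi 0%N - lo 0%N) 0 * \prod_(i < n) Num.max (hi i.+1 - lo i.+1) 0).
  by rewrite [RHS]mulrCA [RHS]mulrC (mulrC c).
by congr (_ * _); apply: eq_bigr => i _; rewrite lift0.
Qed.

Lemma coord_iff (R : realType) (y cc r aa : R) (b : bool) :
  (y \in `[(if b then Num.max (cc - r) 0 else cc - r),
           (if b then Num.min (cc + r) aa else cc + r)]) =
  (`|y - cc| <= r) && (b ==> (0 <= y <= aa)).
Proof.
rewrite in_itv /= ler_distl; case: b => /=; last by rewrite andbT.
rewrite ge_max le_min.
by case: (cc - r <= y); case: (0 <= y); case: (y <= cc + r); case: (y <= aa).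
Qed.

Lemma prod_split (R : realType) (g : nat -> R) (x : R) (k n : nat) :
  (k <= n)%N ->
  \prod_(i < n) (if (i < k)%N then g i else x) = (\prod_(i < k) g i) * x ^+ (n - k).
Proof.
move=> kn; have [m ->] : exists m, n = (k + m)%N by exists (n - k)%N; rewrite subnKC.
rewrite addKn big_split_ord /=; congr (_ * _).
  by apply: eq_bigr => i _; rewrite ltn_ord.
rewrite (eq_bigr (fun=> x)); first by rewrite prodr_const card_ord.
by move=> i _; rewrite ltnNge leq_addr.
Qed.

Lemma prod_indic1 (R : realType) n (B : 'I_n -> set R) (y : 'I_n -> R) :
  (forall i, B i (y i)) -> \prod_(i < n) (\1_(B i) : R -> R) (y i) = 1.
Proof. by move=> h; apply: big1 => i _; rewrite indicE mem_set. Qed.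

Lemma prod_indic0 {R : realType} {n} {B : 'I_n -> set R} {y : 'I_n -> R} {i} :
  ~ B i (y i) -> \prod_(i < n) (\1_(B i) : R -> R) (y i) = 0.
Proof.
by move=> h; rewrite (bigD1 i) //= indicE memNset // mul0r.
Qed.

Definition lo_of (R : realType) n (k : nat) (c : n.-tuple R) (r : R) (i : nat) : R :=
  if (i < k)%N then Num.max (nth 0 c i - r) 0 else nth 0 c i - r.
Definition hi_of (R : realType) n (k : nat) (a : nat -> R) (c : n.-tuple R) (r : R) (i : nat) : R :=
  if (i < k)%N then Num.min (nth 0 c i + r) (a i) else nth 0 c i + r.

Arguments lo_of {R n}.
Arguments hi_of {R n}.

Lemma pointwise (R : realType) (Phi : R -> R) (n k : nat) (a : nat -> R)
   (c x : n.-tuple R) (r l : R) : Phi 0 = 0 ->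
  \1_(cube c r) x * Phi (`|(\1_[set x : n.-tuple R | forall i : 'I_n, (i < k)%N ->
                               0 <= tnth x i <= a i] : n.-tuple R -> R) x| / l) =
  Phi l^-1 * \prod_(i < n) (\1_(`[lo_of k c r i, hi_of k a c r i]%classic) : R -> R) (tnth x i).
Proof.
move=> P0.
have Hi : forall i : 'I_n, `[lo_of k c r i, hi_of k a c r i]%classic (tnth x i) <->
   (`|tnth x i - tnth c i| <= r /\ ((i < k)%N -> 0 <= tnth x i <= a i)).
  move=> i; rewrite /= /lo_of /hi_of (tnth_nth 0 c).
  have -> := coord_iff R (tnth x i) (nth 0 c i) r (a i) (i < k)%N.
  split; first by move=> /andP[-> /implyP].
  by move=> [-> h]; apply/implyP.
case: (pselect (forall i : 'I_n, `[lo_of k c r i, hi_of k a c r i]%classic (tnth x i))) => [hall|hnot].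
  rewrite prod_indic1 // mulr1 indicE mem_set; last by move=> i; case: (Hi i) => /(_ (hall i)) [].
  rewrite indicE mem_set; last by move=> i; case: (Hi i) => /(_ (hall i)) [].
  by rewrite normr1 div1r mul1r.
have [i hi] := (existsNP _).2 hnot.
rewrite (prod_indic0 hi) mulr0.
have [hc|hc] := pselect (cube c r x); last by rewrite indicE memNset // mul0r.
rewrite indicE (mem_set hc) mul1r indicE memNset ?normr0 ?mul0r //.
move=> hE; apply: hi; apply/Hi; split; first exact: hc.
exact: hE.
Qed.

Lemma integral_cube (R : realType) (Phi : R -> R) (n k : nat) (a : nat -> R)
   (c : n.-tuple R) (r l : R) : Phi 0 = 0 -> 0 <= Phi l^-1 ->
  integral_Rn (fun x : n.-tuple R => (\1_(cube c r) x *
     Phi (`|(\1_[set x : n.-tuple R | forall i : 'I_n, (i < k)%N ->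
                               0 <= tnth x i <= a i] : n.-tuple R -> R) x| / l))%:E) =
  (Phi l^-1 * \prod_(i < n) Num.max (hi_of k a c r i - lo_of k c r i) 0)%:E.
Proof.
move=> P0 Pl.
rewrite (_ : (fun x : n.-tuple R => _) = (fun x : n.-tuple R =>
   (Phi l^-1 * \prod_(i < n) (\1_(`[lo_of k c r i, hi_of k a c r i]%classic) : R -> R) (tnth x i))%:E)).
  exact: integral_box.
apply/funext => x; congr (_%:E); exact: pointwise.
Qed.

Definition Gp (R : realType) (n k : nat) (a : nat -> R) (r : R) : R :=
  \prod_(i < n) (if (i < k)%N then Num.min (a i) (2 * r) else 2 * r).

Arguments Gp {R}.

Lemma m_le (R : realType) (n k : nat) (a : nat -> R) (c : n.-tuple R) (r : R) :
  (forall j, (j < k)%N -> 0 < a j) -> 0 < r ->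
  \prod_(i < n) Num.max (hi_of k a c r i - lo_of k c r i) 0 <= Gp n k a r.
Proof.
move=> ha r0; apply: ler_prod => i _; rewrite le_max lexx orbT /=.
rewrite /hi_of /lo_of; case: ifP => ik.
  have h1 : Num.min (nth 0 c i + r) (a i) <= a i by rewrite ge_min lexx orbT.
  have h2 : 0 <= Num.max (nth 0 c i - r) 0 by rewrite le_max lexx orbT.
  have h3 : Num.min (nth 0 c i + r) (a i) <= nth 0 c i + r by rewrite ge_min lexx.
  have h4 : nth 0 c i - r <= Num.max (nth 0 c i - r) 0 by rewrite le_max lexx.
  have := ha i ik.
  rewrite ge_max !le_min; move: h1 h2 h3 h4.
  set m := Num.min _ _; set M := Num.max _ _ => h1 h2 h3 h4 h5.
  by apply/and3P; split; [apply/andP; split| |]; lra.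
rewrite ge_max; apply/andP; split; lra.
Qed.

Lemma corner_m (R : realType) (n k : nat) (a : nat -> R) (r : R) :
  (forall j, (j < k)%N -> 0 < a j) -> 0 < r ->
  \prod_(i < n) Num.max (hi_of k a [tuple of nseq n r] r i - lo_of k [tuple of nseq n r] r i) 0
  = Gp n k a r.
Proof.
move=> ha r0; apply: eq_bigr => i _.
rewrite /hi_of /lo_of /= nth_nseq ltn_ord; case: ifP => ik.
  rewrite subrr maxxx subr0 (_ : r + r = 2 * r); last by lra.
  rewrite minC max_l // le_min; apply/andP; split; [apply/ltW/ha/ik|lra].
rewrite (_ : r + r - (r - r) = 2 * r); last by lra.
by rewrite max_l //; lra.
Qed.

Lemma Gp_eq (R : realType) (n k : nat) (a : nat -> R) (r : R) :
  (k <= n)%N ->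
  ((2 * r) ^+ k / \prod_(j < k) Num.min (a j) (2 * r)) * Gp n k a r = (2 * r) ^+ n
  \/ \prod_(j < k) Num.min (a j) (2 * r) = 0.
Proof.
move=> kn; rewrite /Gp (prod_split R (fun i => Num.min (a i) (2 * r))) //.
have [->|P0] := eqVneq (\prod_(j < k) Num.min (a j) (2 * r)) 0; first by right.
left; rewrite mulrA divfK // -exprD subnKC //.
Qed.

Theorem lemma4p13 (R : realType) (Phi phi : R -> R) (n k : nat)
  (a : nat -> R) :
  young Phi -> Gdec1 phi -> (2 <= n)%N -> (2 <= k <= n)%N ->
  (forall j, (j < k)%N -> 0 < a j) ->
  OM_cube_norm Phi phi
    (\1_[set x : n.-tuple R | forall i : 'I_n, (i < k)%N ->
                               0 <= tnth x i <= a i] : n.-tuple R -> R)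
  = ereal_sup [set ((phi r)^-1 *
        (young_inv Phi (r ^+ k / \prod_(j < k) Num.min (a j) r))^-1)%:E
               | r in [set r : R | 0 < r]].
Proof.
move=> hY [phi0 _ _] _ /andP[_ kn] ha.
have P0 : Phi 0 = 0 by case: hY.
have Pge : forall t, 0 <= t -> 0 <= Phi t by case: hY.
set f := (\1_[set x : n.-tuple R | forall i : 'I_n, (i < k)%N -> 0 <= tnth x i <= a i]
   : n.-tuple R -> R).
have Pk : forall r : R, 0 < r -> 0 < \prod_(j < k) Num.min (a j) r.
  by move=> r r0; apply: prodr_gt0 => j _; rewrite lt_min r0 ha.
have u0 : forall r : R, 0 < r -> 0 < r ^+ k / \prod_(j < k) Num.min (a j) r.
  by move=> r r0; rewrite divr_gt0 ?exprn_gt0 ?Pk.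
have t0p : forall r : R, 0 < r ->
    0 < young_inv Phi (r ^+ k / \prod_(j < k) Num.min (a j) r).
  by move=> r r0; apply: yinv_gt0 => //; exact: u0.
have uG : forall r : R, 0 < r ->
    ((2 * r) ^+ k / \prod_(j < k) Num.min (a j) (2 * r)) * Gp n k a r = (2 * r) ^+ n.
  move=> r r0; case: (Gp_eq R n k a r kn) => // /eqP; rewrite gt_eqF //; apply: Pk.
  by rewrite mulr_gt0.
have Gp0 : forall r : R, 0 < r -> 0 < Gp n k a r.
  move=> r r0; apply: prodr_gt0 => i _; case: ifP => ik; last by rewrite mulr_gt0.
  by rewrite lt_min ha // mulr_gt0.
have lux_le : forall (c : n.-tuple R) (r : R), 0 < r ->
    (lux_norm Phi f c r <=
     ((young_inv Phi ((2 * r) ^+ k / \prod_(j < k) Num.min (a j) (2 * r)))^-1)%:E)%E.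
  move=> c r r0; set u := (2 * r) ^+ k / _; set t0 := young_inv Phi u.
  have r20 : 0 < 2 * r by rewrite mulr_gt0.
  have t00 : 0 < t0 by apply: t0p.
  apply/lee_addgt0Pr => e e0; apply: ereal_inf_lbound.
  have l0 : 0 < t0^-1 + e by rewrite addr_gt0 // invr_gt0.
  exists (t0^-1 + e); last by rewrite EFinD.
  split => //.
  have lt : (t0^-1 + e)^-1 < t0.
    rewrite -[X in _ < X]invrK ltf_pV2 ?posrE ?invr_gt0 //.
    by rewrite ltrDl.
  have il0 : 0 <= (t0^-1 + e)^-1 by rewrite invr_ge0 ltW.
  have Pl := @yinv_below R Phi u _ il0 lt.
  rewrite (_ : integral_Rn _ = (Phi (t0^-1 + e)^-1 *
     \prod_(i < n) Num.max (hi_of k a c r i - lo_of k c r i) 0)%:E); last first.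
    by apply: integral_cube => //; apply/Pge/ltW; rewrite invr_gt0.
  rewrite -EFinM lee_fin mulrC ler_pdivrMr ?exprn_gt0 // mul1r -(uG r r0).
  apply: ler_pM => //.
  - by apply/Pge/ltW; rewrite invr_gt0.
  - by apply: prodr_ge0 => i _; rewrite le_max lexx orbT.
  - exact: m_le.
have lux_ge : forall r : R, 0 < r ->
    (((young_inv Phi ((2 * r) ^+ k / \prod_(j < k) Num.min (a j) (2 * r)))^-1)%:E <=
     lux_norm Phi f [tuple of nseq n r] r)%E.
  move=> r r0; set u := (2 * r) ^+ k / _; set t0 := young_inv Phi u.
  have r20 : 0 < 2 * r by rewrite mulr_gt0.
  have t00 : 0 < t0 by apply: t0p.
  apply: le_ereal_inf_tmp => _ [l [l0 hl] <-]; rewrite lee_fin.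
  have Pl0 : 0 <= Phi l^-1 by apply/Pge/ltW; rewrite invr_gt0.
  move: hl; rewrite (_ : integral_Rn _ = (Phi l^-1 *
     \prod_(i < n) Num.max (hi_of k a [tuple of nseq n r] r i - lo_of k [tuple of nseq n r] r i) 0)%:E); last first.
    exact: integral_cube.
  rewrite corner_m // -EFinM lee_fin mulrC.
  rewrite ler_pdivrMr ?exprn_gt0 // mul1r -(uG r r0) ler_pM2r ?Gp0 // => hl.
  rewrite leNgt; apply/negP => h.
  have : t0 < l^-1 by rewrite -[X in X < _]invrK ltf_pV2 ?posrE ?invr_gt0.
  by move=> /(@yinv_above R Phi hY _ _); rewrite ltNge hl.
rewrite /OM_cube_norm; apply/eqP; rewrite eq_le; apply/andP; split.
- apply: ge_ereal_sup => _ [c [r [r0 ->]]].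
  have r20 : 0 < 2 * r by rewrite mulr_gt0.
  apply: (le_trans (y := ((phi (2 * r))^-1 *
     (young_inv Phi ((2 * r) ^+ k / \prod_(j < k) Num.min (a j) (2 * r)))^-1)%:E)).
    rewrite EFinM; apply: lee_wpmul2l; last exact: lux_le.
    by rewrite lee_fin invr_ge0 ltW // phi0.
  by apply: ereal_sup_ubound; exists (2 * r).
- apply: ge_ereal_sup => _ [s s0 <-].
  have r0 : 0 < s / 2 by rewrite divr_gt0.
  have e2 : s = 2 * (s / 2) by rewrite mulrC divfK.
  apply: le_trans; last first.
    apply: ereal_sup_ubound; exists [tuple of nseq n (s / 2)], (s / 2); split => //.
  rewrite -e2 EFinM; apply: lee_wpmul2l.
    by rewrite lee_fin invr_ge0 ltW // phi0.
  by rewrite {1 2}e2; apply: lux_ge.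
Qed.
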